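(* Let $\beta>0$ and $k<0$. Let \[f_{+-}(x,y,z)=\beta(x^2y^2+y^2z^2+x^2z^2)+\Big(x^2+y^2+z^2-\tfrac12\Big)^2-\tfrac{1-k}{4}.\] Then the zero set $Q^{+-}(k)=\{(x,y,z)\in\mathbb{R}^3: f_{+-}(x,y,z)=0\}$ is a connected compact surface homeomorphic to a sphere.
   Context: $Q^{+-}(k)$ is an octahedral quartic, i.e. $f_{+-}$ is invariant under the group of $3\times 3$ signed permutation matrices. *)

(* Defs.v *)
From HB Require Import structures.
From mathcomp Require Import all_boot all_order all_algebra.
From mathcomp Require Import all_classical all_reals all_analysis.
Set Implicit Arguments. Unset Strict Implicit. Unset Printing Implicit Defensive.
Import Order.TTheory GRing.Theory Num.Theory.
Import numFieldNormedType.Exports.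
Local Open Scope classical_set_scope.
Local Open Scope ring_scope.

Definition cx {R : realType} (v : 'rV[R]_3) : R := v ord0 (@Ordinal 3 0 isT).
Definition cy {R : realType} (v : 'rV[R]_3) : R := v ord0 (@Ordinal 3 1 isT).
Definition cz {R : realType} (v : 'rV[R]_3) : R := v ord0 (@Ordinal 3 2 isT).

Definition fpm {R : realType} (beta k : R) (v : 'rV[R]_3) : R :=
  let x := cx v in let y := cy v in let z := cz v in
  beta * (x^+2 * y^+2 + y^+2 * z^+2 + x^+2 * z^+2)
  + (x^+2 + y^+2 + z^+2 - 2^-1) ^+ 2 - (1 - k) / 4.

Definition Qpm {R : realType} (beta k : R) : set 'rV[R]_3 :=
  [set v | fpm beta k v = 0].

Definition sphere2 (R : realType) : set 'rV[R]_3 :=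
  [set v | cx v ^+ 2 + cy v ^+ 2 + cz v ^+ 2 = 1].

Definition homeomorphic_sets {T U : topologicalType} (A : set T) (B : set U) : Prop :=
  exists (f : T -> U) (g : U -> T),
    [/\ {within A, continuous f}, {within B, continuous g},
        f @` A `<=` B, g @` B `<=` A &
        (forall a, A a -> g (f a) = a) /\ (forall b, B b -> f (g b) = b)].

(* Main.v *)
Require Import Defs.
From HB Require Import structures.
From mathcomp Require Import all_boot all_order all_algebra.
From mathcomp Require Import all_classical all_reals all_analysis.
From mathcomp Require Import ring lra.
Import Order.TTheory GRing.Theory Num.Theory.
Import numFieldNormedType.Exports.
Local Open Scope classical_set_scope.
Local Open Scope ring_scope.

Section S.
Variable R : realType.
Implicit Types (w u v : 'rV[R]_3).
Variables beta k : R.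
Hypothesis hb : 0 < beta.
Hypothesis hk : k < 0.

Definition n2 (w : 'rV[R]_3) := cx w ^+ 2 + cy w ^+ 2 + cz w ^+ 2.
Definition pp (w : 'rV[R]_3) :=
  cx w ^+ 2 * cy w ^+ 2 + cy w ^+ 2 * cz w ^+ 2 + cx w ^+ 2 * cz w ^+ 2.
Definition Aa w := beta * pp w + n2 w ^+ 2.
Definition rt (a b : R) := (b + Num.sqrt (b ^+ 2 - a * k)) / (2 * a).
Definition sig w := rt (Aa w) (n2 w).
Definition F (w : 'rV[R]_3) := Num.sqrt (sig w) *: w.
Definition G (w : 'rV[R]_3) := (Num.sqrt (n2 w))^-1 *: w.

Lemma cxZ (c : R) (w : 'rV[R]_3) : cx (c *: w) = c * cx w. Proof. by rewrite /cx mxE. Qed.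
Lemma cyZ (c : R) (w : 'rV[R]_3) : cy (c *: w) = c * cy w. Proof. by rewrite /cy mxE. Qed.
Lemma czZ (c : R) (w : 'rV[R]_3) : cz (c *: w) = c * cz w. Proof. by rewrite /cz mxE. Qed.
Lemma n2Z (c : R) (w : 'rV[R]_3) : n2 (c *: w) = c ^+ 2 * n2 w.
Proof. rewrite /n2 cxZ cyZ czZ; ring. Qed.
Lemma AaZ (c : R) (w : 'rV[R]_3) : Aa (c *: w) = c ^+ 4 * Aa w.
Proof. rewrite /Aa n2Z /pp cxZ cyZ czZ; ring. Qed.
Lemma fpmE w : fpm beta k w = Aa w - n2 w + k / 4.
Proof. rewrite /fpm /Aa /pp /n2 /=. by field. Qed.
Lemma n2_ge0 w : 0 <= n2 w.
Proof. by rewrite /n2 !addr_ge0 ?sqr_ge0. Qed.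
Lemma pp_ge0 w : 0 <= pp w.
Proof. rewrite /pp; apply: addr_ge0; [apply: addr_ge0|]; apply: mulr_ge0; exact: sqr_ge0. Qed.
Lemma Aa_gt0 w : 0 < n2 w -> 0 < Aa w.
Proof.
move=> h; rewrite /Aa.
have a : 0 <= beta * pp w by rewrite mulr_ge0 ?pp_ge0 // ltW.
have b : 0 < n2 w ^+ 2 by rewrite exprn_gt0.
move: a b; set a := beta * pp w; set b := n2 w ^+ 2; lra.
Qed.

Lemma rt_spec (a b : R) : 0 < a -> 0 <= b ->
  0 < rt a b /\ a * rt a b ^+ 2 - b * rt a b + k / 4 = 0.
Proof.
move=> a0 b0.
have hak : a * k < 0 by rewrite pmulr_rlt0.
have hD : 0 <= b ^+ 2 - a * k by nra.
have hs := sqr_sqrtr hD.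
have hs0 : 0 < Num.sqrt (b ^+ 2 - a * k).
  by rewrite sqrtr_gt0; nra.
split.
  by rewrite /rt divr_gt0 //; nra.
rewrite /rt; set s := Num.sqrt _ in hs hs0 *.
have a0' : a != 0 by rewrite lt0r_neq0.
rewrite (_ : _ - _ + _ = (s ^+ 2 - (b ^+ 2 - a * k)) / (4 * a)); last by field.
by rewrite hs subrr mul0r.
Qed.

Lemma rt_uniq (a b t : R) : 0 < a -> 0 <= b -> 0 < t ->
  a * t ^+ 2 - b * t + k / 4 = 0 -> t = rt a b.
Proof.
move=> a0 b0 t0 ht; have [r0 hr] := @rt_spec a b a0 b0.
set r := rt a b in r0 hr *.
have : (t - r) * (a * (t + r) - b) = 0 by nra.
move/eqP; rewrite mulf_eq0 => /orP[/eqP|/eqP h]; first by move/eqP; rewrite subr_eq0 => /eqP.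
exfalso; have hb' : b = a * (t + r) by lra.
rewrite hb' in ht.
have e : a * t ^+ 2 - a * (t + r) * t = - (a * r * t) by ring.
have p : 0 < a * r * t by apply: mulr_gt0 => //; apply: mulr_gt0.
rewrite e in ht; clearbody r; set q := a * r * t in p ht; clearbody q.
have hk4 : k / 4 < 0 by rewrite pmulr_llt0.
lra.
Qed.

Lemma sig_gt0 w : 0 < n2 w -> 0 < sig w.
Proof. by move=> h; case: (@rt_spec (Aa w) (n2 w) (Aa_gt0 _ h) (n2_ge0 w)). Qed.

Lemma F_in w : 0 < n2 w -> Qpm beta k (F w).
Proof.
move=> h; have hs := sqr_sqrtr (ltW (sig_gt0 _ h)).
rewrite /Qpm /= fpmE /F AaZ n2Z hs.
rewrite (_ : 4 = 2 * 2)%N // exprM hs.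
have [_ e] := @rt_spec (Aa w) (n2 w) (Aa_gt0 _ h) (n2_ge0 w).
rewrite -e /sig; ring.
Qed.

Lemma Q_n2 v : Qpm beta k v -> 0 < n2 v.
Proof.
rewrite /Qpm /= fpmE => h.
rewrite lt_neqAle n2_ge0 andbT; apply/eqP => e.
have h0 := sqr_ge0 (cx v); have h1 := sqr_ge0 (cy v); have h2 := sqr_ge0 (cz v).
move: e h h0 h1 h2; rewrite /Aa /pp /n2.
set X := cx v ^+ 2; set Y := cy v ^+ 2; set Z := cz v ^+ 2 => e h h0 h1 h2.
have hX : X = 0 by lra.
have hY : Y = 0 by lra.
have hZ : Z = 0 by lra.
rewrite hX hY hZ !(mulr0, mul0r, add0r, addr0, expr0n) /= in h.
have hk4 : k / 4 < 0 by rewrite pmulr_llt0.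
lra.
Qed.

Lemma G_in v : 0 < n2 v -> @sphere2 R (G v).
Proof.
move=> h; rewrite /sphere2 /= -/(n2 (G v)) /G n2Z exprVn sqr_sqrtr ?ltW //.
by rewrite mulVf // lt0r_neq0.
Qed.

Lemma GF u : @sphere2 R u -> G (F u) = u.
Proof.
rewrite /sphere2 /= -/(n2 u) => h.
have h0 : 0 < n2 u by rewrite h.
have s0 := sig_gt0 _ h0.
rewrite /G /F n2Z h mulr1 sqrtr_sqr ger0_norm ?sqrtr_ge0 // scalerA mulVf ?scale1r //.
by rewrite lt0r_neq0 // sqrtr_gt0.
Qed.

Lemma FG v : Qpm beta k v -> F (G v) = v.
Proof.
move=> hv; have h := Q_n2 _ hv.
set l := (Num.sqrt (n2 v))^-1.
have l0 : 0 < l by rewrite invr_gt0 sqrtr_gt0.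
have l2 : l ^+ 2 * n2 v = 1 by rewrite /l exprVn sqr_sqrtr ?ltW // mulVf // lt0r_neq0.
have hs : sig (l *: v) = n2 v.
  rewrite /sig AaZ n2Z; symmetry; apply: rt_uniq => //.
  - by rewrite mulr_gt0 ?exprn_gt0 ?Aa_gt0.
  - by rewrite mulr_ge0 ?sqr_ge0 ?n2_ge0.
  - move: hv; rewrite /Qpm /= fpmE => hv.
    rewrite -hv.
    have -> : l ^+ 4 * Aa v * n2 v ^+ 2 = (l ^+ 2 * n2 v) ^+ 2 * Aa v by ring.
    have -> : l ^+ 2 * n2 v * n2 v = (l ^+ 2 * n2 v) * n2 v by ring.
    rewrite l2; ring.
rewrite /F /G -/l hs scalerA mulrV ?scale1r //.
by rewrite unitfE lt0r_neq0 // sqrtr_gt0.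
Qed.

Lemma cx_cont : continuous (@cx R).
Proof. exact: coord_continuous. Qed.
Lemma cy_cont : continuous (@cy R).
Proof. exact: coord_continuous. Qed.
Lemma cz_cont : continuous (@cz R).
Proof. exact: coord_continuous. Qed.
Lemma contD (f g : 'rV[R]_3 -> R) x : {for x, continuous f} -> {for x, continuous g} -> {for x, continuous (fun w => f w + g w)}.
Proof. move=> hf hg; exact: (continuousD hf hg). Qed.
Lemma contB (f g : 'rV[R]_3 -> R) x : {for x, continuous f} -> {for x, continuous g} -> {for x, continuous (fun w => f w - g w)}.
Proof. move=> hf hg; exact: (continuousB hf hg). Qed.
Lemma contM (f g : 'rV[R]_3 -> R) x : {for x, continuous f} -> {for x, continuous g} -> {for x, continuous (fun w => f w * g w)}.
Proof. move=> hf hg; exact: (continuousM hf hg). Qed.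
Lemma contC (c : R) x : {for x, continuous (fun _ : 'rV[R]_3 => c)}.
Proof. exact: cst_continuous. Qed.
Lemma contV (f : 'rV[R]_3 -> R) x : f x != 0 -> {for x, continuous f} -> {for x, continuous (fun w => (f w)^-1)}.
Proof. move=> h hf; exact: (continuousV h hf). Qed.
Lemma sq_cont (f : 'rV[R]_3 -> R) x : {for x, continuous f} -> {for x, continuous (fun w => f w ^+ 2)}.
Proof. move=> h; rewrite (_ : (fun w => f w ^+ 2) = f \* f); last by apply/funext => w; rewrite /= expr2. exact: continuousM. Qed.
Lemma sqrt_cont (f : 'rV[R]_3 -> R) x : {for x, continuous f} -> {for x, continuous (fun w => Num.sqrt (f w))}.
Proof. move=> h. exact: (continuous_comp h (@sqrt_continuous R _)). Qed.
Lemma n2_cont : continuous n2.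
Proof. move=> x; rewrite /n2. apply: contD; [apply: contD|]; apply: sq_cont.
 exact: cx_cont. exact: cy_cont. exact: cz_cont. Qed.
Lemma pp_cont : continuous pp.
Proof. move=> x; rewrite /pp. apply: contD; [apply: contD|]; apply: contM; apply: sq_cont;
 solve [exact: cx_cont| exact: cy_cont| exact: cz_cont]. Qed.
Lemma Aa_cont : continuous Aa.
Proof. move=> x; rewrite /Aa. apply: contD; [apply: contM|apply: sq_cont].
 exact: contC. exact: pp_cont. exact: n2_cont. Qed.
Lemma sig_cont w : 0 < n2 w -> {for w, continuous sig}.
Proof.
move=> h; rewrite /sig /rt; apply: contM.
  apply: contD; first exact: n2_cont.
  apply: sqrt_cont; apply: contB; first exact: sq_cont (n2_cont _).
  by apply: contM; [exact: Aa_cont|exact: contC].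
apply: contV; first by rewrite mulf_neq0 ?pnatr_eq0 // lt0r_neq0 // Aa_gt0.
by apply: contM; [exact: contC| exact: Aa_cont].
Qed.
Lemma F_cont w : 0 < n2 w -> {for w, continuous F}.
Proof.
move=> h; apply: continuousZ; first exact: sqrt_cont (sig_cont _ h).
exact: cvg_id.
Qed.
Lemma G_cont w : 0 < n2 w -> {for w, continuous G}.
Proof.
move=> h; apply: continuousZ; last exact: cvg_id.
apply: contV; first by rewrite lt0r_neq0 // sqrtr_gt0.
exact: sqrt_cont (n2_cont _).
Qed.

Lemma n2_eq0 w : n2 w = 0 -> [/\ cx w = 0, cy w = 0 & cz w = 0].
Proof.
rewrite /n2 => e.
have h0 := sqr_ge0 (cx w); have h1 := sqr_ge0 (cy w); have h2 := sqr_ge0 (cz w).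
move: e h0 h1 h2; set X := cx w ^+ 2; set Y := cy w ^+ 2; set Z := cz w ^+ 2 => e h0 h1 h2.
have hX : X == 0 by apply/eqP; lra.
have hY : Y == 0 by apply/eqP; lra.
have hZ : Z == 0 by apply/eqP; lra.
by move: hX hY hZ; rewrite /X /Y /Z !sqrf_eq0 => /eqP -> /eqP -> /eqP ->.
Qed.

Lemma n2_pos w : ~ [/\ cx w = 0, cy w = 0 & cz w = 0] -> 0 < n2 w.
Proof.
move=> h; rewrite lt_neqAle n2_ge0 andbT; apply/eqP => e.
by apply: h; apply: n2_eq0.
Qed.

Definition e1 : 'rV[R]_3 := \row_(j < 3) ((val j == 0%N)%:R).
Definition e3 : 'rV[R]_3 := \row_(j < 3) ((val j == 2%N)%:R).
Definition seg u v (t : R) : 'rV[R]_3 := (1 - t) *: u + t *: v.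

Lemma cx_seg u v t : cx (seg u v t) = (1 - t) * cx u + t * cx v.
Proof. by rewrite /cx /seg !mxE. Qed.
Lemma cy_seg u v t : cy (seg u v t) = (1 - t) * cy u + t * cy v.
Proof. by rewrite /cy /seg !mxE. Qed.
Lemma cz_seg u v t : cz (seg u v t) = (1 - t) * cz u + t * cz v.
Proof. by rewrite /cz /seg !mxE. Qed.
Lemma e1x : cx e1 = 1. Proof. by rewrite /cx mxE. Qed.
Lemma e1y : cy e1 = 0. Proof. by rewrite /cy mxE. Qed.
Lemma e1z : cz e1 = 0. Proof. by rewrite /cz mxE. Qed.
Lemma e3x : cx e3 = 0. Proof. by rewrite /cx mxE. Qed.
Lemma e3y : cy e3 = 0. Proof. by rewrite /cy mxE. Qed.
Lemma e3z : cz e3 = 1. Proof. by rewrite /cz mxE. Qed.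

Lemma seg0 u v : seg u v 0 = u.
Proof. by rewrite /seg subr0 scale1r scale0r addr0. Qed.
Lemma seg1 u v : seg u v 1 = v.
Proof. by rewrite /seg subrr scale0r scale1r add0r. Qed.

Lemma seg_pos1 u t : @sphere2 R u -> cz u != -1 -> 0 <= t <= 1 -> 0 < n2 (seg u e3 t).
Proof.
rewrite /sphere2 /= => Su hz1 _; apply: n2_pos.
rewrite cx_seg cy_seg cz_seg e3x e3y e3z !mulr0 !addr0 mulr1 => -[hx hy hz].
have key : (1 - t) ^+ 2 * (cx u ^+ 2 + cy u ^+ 2 + cz u ^+ 2)
   = ((1 - t) * cx u) ^+ 2 + ((1 - t) * cy u) ^+ 2 + ((1 - t) * cz u) ^+ 2 by ring.
have hz' : (1 - t) * cz u = - t by lra.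
rewrite Su hx hy hz' in key.
have k2 : 1 - 2 * t = 0.
  have e : (1 - t) ^+ 2 * 1 - (0 ^+ 2 + 0 ^+ 2 + (- t) ^+ 2) = 1 - 2 * t by ring.
  by rewrite -e key subrr.
have ht : t = 2^-1 by lra.
rewrite ht in hz.
have : cz u = -1 by lra.
by move=> h; rewrite h eqxx in hz1.
Qed.

Lemma seg_pos2 u t : cz u = -1 -> 0 <= t <= 1 -> 0 < n2 (seg u e1 t).
Proof.
move=> hz /andP[t0 t1]; apply: n2_pos.
rewrite cx_seg cy_seg cz_seg e1x e1y e1z hz !mulr0 !addr0 mulr1 => -[hx hy hz'].
have ht : t = 1 by lra.
by move: hx; rewrite ht subrr mul0r add0r => /eqP; rewrite oner_eq0.
Qed.

Lemma seg_pos3 t : 0 < n2 (seg e1 e3 t).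
Proof.
apply: n2_pos.
rewrite cx_seg cy_seg cz_seg e1x e1y e1z e3x e3y e3z => -[hx hy hz].
lra.
Qed.

Lemma G_sphere u : @sphere2 R u -> G u = u.
Proof. by rewrite /sphere2 /= /G -/(n2 u) => ->; rewrite sqrtr1 invr1 scale1r. Qed.

Lemma e1S : @sphere2 R e1.
Proof. by rewrite /sphere2 /= e1x e1y e1z; lra. Qed.
Lemma e3S : @sphere2 R e3.
Proof. by rewrite /sphere2 /= e3x e3y e3z; lra. Qed.

Lemma seg_cont u v t : {for t, continuous (seg u v)}.
Proof.
rewrite /seg; apply: continuousD; apply: continuousZr_tmp; last exact: cvg_id.
by apply: continuousB; [exact: cst_continuous|exact: cvg_id].
Qed.
Lemma entry_le (x : 'rV[R]_3) (j : 'I_3) : x ord0 j ^+ 2 <= n2 x.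
Proof.
have h0 := sqr_ge0 (cx x); have h1 := sqr_ge0 (cy x); have h2 := sqr_ge0 (cz x).
rewrite /n2 in h0 h1 h2 *.
case: j => -[|[|[|//]]] Hj.
- rewrite /cx (bool_irrelevance Hj isT) in h0 h1 h2 *. lra.
- rewrite /cy (bool_irrelevance Hj isT) in h0 h1 h2 *. lra.
- rewrite /cz (bool_irrelevance Hj isT) in h0 h1 h2 *. lra.
Qed.

Lemma sphere_bounded : bounded_set (@sphere2 R).
Proof.
rewrite /= /bounded_near.
near=> M => x /= Sx.
have hx : `|x| <= 1.
  rewrite [leLHS]/Num.norm /= mx_normrE.
  apply: bigmax_le => // -[i j] _ /=.
  rewrite (ord1 i).
  have := entry_le x j; rewrite /n2 Sx => h.
  set a := x ord0 j in h *.
  have e : `|a| ^+ 2 = a ^+ 2 by rewrite real_normK ?num_real.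
  have := normr_ge0 a; nra.
apply: le_trans hx _.
near: M; apply: nbhs_pinfty_ge; exact: num_real.
Unshelve. all: by end_near. Qed.


Lemma sphere_closed : closed (@sphere2 R).
Proof.
have -> : @sphere2 R = n2 @^-1` [set 1] by [].
apply: preimage_closed; last exact: closed_eq.
by move=> x _; exact: n2_cont.
Qed.

Lemma sphere_compact : compact (@sphere2 R).
Proof. exact: bounded_closed_compact sphere_bounded sphere_closed. Qed.

Definition mdir u := if cz u == -1 then e1 else e3.
Definition Cu u := (fun t => G (seg u (mdir u) t)) @` `[0, 1]%classic
   `|` (fun t => G (seg e1 e3 t)) @` `[0, 1]%classic.

Lemma mdir_pos u t : @sphere2 R u -> 0 <= t <= 1 -> 0 < n2 (seg u (mdir u) t).
Proof.
move=> Su ht; rewrite /mdir; case: eqP => h.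
  exact: seg_pos2.
by apply: seg_pos1 => //; apply/eqP.
Qed.

Lemma img_conn (f : R -> 'rV[R]_3) : (forall t, 0 <= t <= 1 -> {for t, continuous f}) ->
  connected (f @` `[0, 1]%classic).
Proof.
move=> hf; apply: connected_continuous_connected; first exact: segment_connected.
apply: continuous_in_subspaceT => t; rewrite inE /= in_itv /= => ht.
exact: hf.
Qed.

Lemma Cu_conn u : @sphere2 R u -> connected (Cu u).
Proof.
move=> Su; apply: connectedU.
- exists (G (mdir u)); split.
    by exists 1; [rewrite /= in_itv /= lexx ler01|rewrite seg1].
  rewrite /mdir; case: eqP => _.
    by exists 0; [rewrite /= in_itv /= lexx ler01|rewrite seg0].
  by exists 1; [rewrite /= in_itv /= lexx ler01|rewrite seg1].
- apply: img_conn => t ht.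
  apply: continuous_comp; first exact: seg_cont.
  apply: G_cont; exact: mdir_pos.
- apply: img_conn => t ht.
  apply: continuous_comp; first exact: seg_cont.
  apply: G_cont; exact: seg_pos3.
Qed.

Lemma sphere_connected : connected (@sphere2 R).
Proof.
have -> : @sphere2 R = \bigcup_(u in @sphere2 R) Cu u.
  apply/seteqP; split => x.
    move=> Sx; exists x => //; left; exists 0; first by rewrite /= in_itv /= lexx ler01.
    by rewrite seg0 G_sphere.
  move=> [u Su [[t ht <-]|[t ht <-]]]; apply: G_in.
    by apply: mdir_pos => //; move: ht; rewrite /= in_itv.
  exact: seg_pos3.
apply: bigcup_connected; last by move=> u Su; exact: Cu_conn.
exists e3 => u _; right; exists 1; first by rewrite /= in_itv /= lexx ler01.
by rewrite seg1 G_sphere //; exact: e3S.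
Qed.
End S.

Theorem lemma2 (R : realType) (beta k : R) :
  0 < beta -> k < 0 ->
  [/\ compact (Qpm beta k), connected (Qpm beta k) &
      homeomorphic_sets (@sphere2 R) (Qpm beta k)].
Proof.
move=> hb hk.
have Fc : {within @sphere2 R, continuous (@F R beta k)}.
  apply: continuous_in_subspaceT => u; rewrite inE => Su.
  apply: F_cont => //; move: Su; rewrite /sphere2 /= -/(@n2 R u) => ->; exact: ltr01.
have Gc : {within Qpm beta k, continuous (@G R)}.
  apply: continuous_in_subspaceT => v; rewrite inE => Qv.
  by apply: G_cont; exact: Q_n2 Qv.
have FS : @F R beta k @` @sphere2 R `<=` Qpm beta k.
  move=> _ [u Su <-]; apply: F_in => //.
  by move: Su; rewrite /sphere2 /= -/(@n2 R u) => ->; exact: ltr01.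
have GQ : @G R @` Qpm beta k `<=` @sphere2 R.
  by move=> _ [v Qv <-]; apply: G_in; exact: Q_n2 Qv.
have QE : Qpm beta k = @F R beta k @` @sphere2 R.
  apply/seteqP; split => [v Qv|]; last exact: FS.
  by exists (G R v); [apply: GQ; exists v|rewrite FG].
split.
- by rewrite QE; apply: continuous_compact => //; exact: sphere_compact.
- by rewrite QE; apply: connected_continuous_connected => //; exact: sphere_connected.
- exists (@F R beta k), (@G R); split => //; split.
    by move=> a Sa; exact: GF.
  by move=> b Qb; exact: FG.
Qed.
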